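(* Let $(X,d)$ be a compact metric space and $\mathbb{F}=\{f_n:n\in\mathbb{N}\}$ a sequence of continuous surjective self-maps of $X$, and let $k\in\mathbb{N}$. Then $(X,\mathbb{F}_k)$ is equicontinuous if and only if $(X,\mathbb{F})$ is equicontinuous.
   Context: Write $\omega_n=f_n\circ\cdots\circ f_1$ and, for $n>k$, $\omega^k_n=f_n\circ\cdots\circ f_{k+1}$. $\mathbb{F}_k=\{f_n:n\ge k+1\}$ is the truncated family, generating the system with compositions $\omega^k_n$, $n>k$. $(X,\mathbb{F})$ is equicontinuous if for every $\epsilon>0$ there is $\delta>0$ such that $d(x,y)<\delta$ implies $d(\omega_n(x),\omega_n(y))<\epsilon$ for all $n\in\mathbb{N}$ and all $x,y\in X$; $(X,\mathbb{F}_k)$ is equicontinuous if the same holds with $\omega^k_n$, $n>k$, in place of $\omega_n$. *)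

(* Defs.v *)
From HB Require Import structures.
From mathcomp Require Import all_boot all_order all_algebra.
From mathcomp Require Import all_classical all_reals all_analysis.
Set Implicit Arguments. Unset Strict Implicit. Unset Printing Implicit Defensive.
Import Order.TTheory GRing.Theory Num.Theory.
Local Open Scope ring_scope.

(* Nonautonomous system: the family F = {f_n : n >= 1} is given by
   f : nat -> X -> X, where only the values f n for n >= 1 matter. *)

(* omega_from f k n = f_n o ... o f_(k+1)  (identity if n <= k).
   omega_n = omega_from f 0 n,  omega^k_n = omega_from f k n for n > k. *)
Fixpoint omega_from {X : Type} (f : nat -> X -> X) (k n : nat) : X -> X :=
  match n with
  | 0 => id
  | n'.+1 => if (k <= n')%N then f n'.+1 \o omega_from f k n' else id
  end.

(* (X, F_k) is equicontinuous: for every eps>0 there is delta>0 such that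
   d(x,y)<delta implies d(omega^k_n x, omega^k_n y) < eps for all n>k and all x,y.
   (X, F) is the case k = 0, with n ranging over n >= 1.) *)
Definition equicontinuous_from {R : realType} {X : metricType R}
  (f : nat -> X -> X) (k : nat) : Prop :=
  forall eps : R, 0 < eps -> exists2 delta : R, 0 < delta &
    forall (n : nat) (x y : X), (k < n)%N -> mdist x y < delta ->
      mdist (omega_from f k n x) (omega_from f k n y) < eps.

(* Main.v *)
Require Import Defs.
From HB Require Import structures.
From mathcomp Require Import all_boot all_order all_algebra.
From mathcomp Require Import all_classical all_reals all_analysis.
From mathcomp Require Import lra.
Import Order.TTheory GRing.Theory Num.Theory.
Local Open Scope ring_scope.
Local Open Scope classical_set_scope.

Lemma cluster_lemma (R : realType) (X : metricType R) (S : R -> set (X * X)) :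
  compact [set: X] ->
  (forall d, 0 < d -> S d !=set0) ->
  (forall d1 d2, d1 <= d2 -> S d1 `<=` S d2) ->
  exists p q : X, forall d r, 0 < d -> 0 < r ->
    exists a b, S d (a, b) /\ mdist p a < r /\ mdist q b < r.
Proof.
move=> cX Sne Smono.
pose F := filter_from [set d : R | 0 < d] S.
have FF : ProperFilter F.
  apply: filter_from_proper => //; apply: filter_from_filter.
    exists 1 => //=.
  move=> i j i0 j0; exists (Num.min i j); first by rewrite /= lt_min i0 j0.

  by move=> z Sz; split; apply: Smono Sz; rewrite ge_min lexx ?orbT.
have cXX : compact [set: X * X] by rewrite -setXTT; apply: compact_setX.
have [[p q] [_ cl]] := cXX F FF filterT.
exists p, q => d r d0 r0.
have FS : F (S d) by exists d.
have [[a b] [Sab [/= pa qb]]] := cl (S d) (ball (p, q) r) FS (nbhsx_ballx _ _ r0).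
exists a, b; move: pa qb; rewrite !ballEmdist. by [].
Qed.

Lemma omega_id {X : Type} (f : nat -> X -> X) i n x :
  (n <= i)%N -> omega_from f i n x = x.
Proof.
case: n => [//|n] /= H.
by have -> : (i <= n)%N = false by apply/negbTE; rewrite -ltnNge; exact: leq_trans H.
Qed.

Lemma omega_step {X : Type} (f : nat -> X -> X) i n x :
  (i < n)%N -> omega_from f i n x = omega_from f i.+1 n (f i.+1 x).
Proof.
elim: n => [//|n IH] H /=.
have -> : (i <= n)%N by [].
case: (ltngtP i n) => [lt_in|gt_in|<-].
- by rewrite /= IH // lt_in.
- by move: H; rewrite ltnS leqNgt gt_in.
- by rewrite /= omega_id.
Qed.

Lemma mdist_trans3 (R : realType) (X : metricType R) (a b c d : X) :
  mdist a d <= mdist a b + mdist b c + mdist c d.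
Proof.
apply: le_trans (metric_triangle a c d) _; rewrite lerD2r.
exact: metric_triangle.
Qed.

Lemma unif_cont (R : realType) (X : metricType R) (g : X -> X) :
  compact [set: X] -> continuous g ->
  forall eps : R, 0 < eps -> exists2 delta : R, 0 < delta &
    forall x y : X, mdist x y < delta -> mdist (g x) (g y) < eps.
Proof.
move=> cX gc eps e0.
apply: contrapT => Hn.
pose S d := [set ab : X * X | mdist ab.1 ab.2 < d /\ eps <= mdist (g ab.1) (g ab.2)].
have [p [q Hpq]] : exists p q : X, forall d r, 0 < d -> 0 < r ->
    exists a b, S d (a, b) /\ mdist p a < r /\ mdist q b < r.
  apply: cluster_lemma => //.
    move=> d d0; apply: contrapT => Hne; apply: Hn; exists d => // x y xy.
    rewrite ltNge; apply/negP => H; apply: Hne; by exists (x, y).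
  move=> d1 d2 d12 [a b] [/= ab H]; split => //; exact: lt_le_trans d12.
have pq : p = q.
  apply: mdist_positivity; apply: contrapT => /eqP Hp0.
  have Hp : 0 < mdist p q by rewrite lt_neqAle mdist_ge0 andbT eq_sym.
  have r0 : 0 < mdist p q / 3 by rewrite divr_gt0.
  have [a [b [[/= ab _] [pa qb]]]] := Hpq _ _ r0 r0.
  have := @mdist_trans3 _ _ p a b q; rewrite (metric_sym b q).
  lra.
subst q.
have [r r0 Hr] := (nbhs_ballP _ _).1 (gc p _ (nbhsx_ballx (g p) (eps / 2) (divr_gt0 e0 (ltr0Sn _ 1)))).
have [a [b [[/= _ ab] [pa pb]]]] := Hpq _ _ r0 r0.
have ga : mdist (g p) (g a) < eps / 2.
  by have := Hr a; rewrite /= !ballEmdist /=; apply.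
have gb : mdist (g p) (g b) < eps / 2.
  by have := Hr b; rewrite /= !ballEmdist /=; apply.
have := metric_triangle (g a) (g p) (g b); rewrite (metric_sym (g a) (g p)).
lra.
Qed.

Lemma cont_ball (R : realType) (X : metricType R) (g : X -> X) (p : X) (e : R) :
  continuous g -> 0 < e -> exists2 r : R, 0 < r &
    forall a, mdist p a < r -> mdist (g p) (g a) < e.
Proof.
move=> gc e0.
have [r r0 Hr] := (nbhs_ballP _ _).1 (gc p _ (nbhsx_ballx (g p) e e0)).
exists r => // a pa.
by have := Hr a; rewrite /= !ballEmdist /=; apply.
Qed.

Lemma step (R : realType) (X : metricType R) (f : nat -> X -> X) (i : nat) :
  compact [set: X] -> continuous (f i.+1) -> (forall y, exists x, f i.+1 x = y) ->
  (equicontinuous_from f i.+1 <-> equicontinuous_from f i).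
Proof.
move=> cX gc gs; set g := f i.+1; split.
- move=> E eps e0.
  have [d1 d10 H1] := E eps e0.
  have m0 : 0 < Num.min d1 eps by rewrite lt_min d10 e0.
  have [d2 d20 H2] := @unif_cont _ _ _ cX gc _ m0.
  exists d2 => // n x y lt_in xy.
  rewrite !(@omega_step _ _ i n) //.
  have := H2 _ _ xy; rewrite lt_min => /andP [gd1 geps].
  case: (ltngtP i.+1 n) => [lt1|lt2|<-]; first exact: H1.
    by move: lt2; rewrite ltnS leqNgt lt_in.
  by rewrite !omega_id.
- move=> E eps e0.
  have e30 : 0 < eps / 3 by rewrite divr_gt0.
  have [d0 d00 H0] := E _ e30.
  apply: contrapT => Hn.
  pose S d := [set ab : X * X | mdist (g ab.1) (g ab.2) < d /\ exists n, (i.+1 < n)%N /\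
     eps <= mdist (omega_from f i.+1 n (g ab.1)) (omega_from f i.+1 n (g ab.2))].
  have [p [q Hpq]] : exists p q : X, forall d r, 0 < d -> 0 < r ->
      exists a b, S d (a, b) /\ mdist p a < r /\ mdist q b < r.
    apply: cluster_lemma => //.
      move=> d dpos; apply: contrapT => Hne; apply: Hn; exists d => // n x y lt_n xy.
      rewrite ltNge; apply/negP => H; apply: Hne.
      have [a ga] := gs x; have [b gb] := gs y.
      exists (a, b); split => /=; rewrite /g ga gb //; by exists n.
    move=> d1 d2 d12 [a b] [/= ab H]; split => //; exact: lt_le_trans d12.
  have gpq : g p = g q.
    apply: mdist_positivity; apply: contrapT => /eqP Hp0.
    have Hp : 0 < mdist (g p) (g q) by rewrite lt_neqAle mdist_ge0 andbT eq_sym.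
    have r0 : 0 < mdist (g p) (g q) / 3 by rewrite divr_gt0.
    have [rp rp0 Hrp] := @cont_ball _ _ _ p _ gc r0.
    have [rq rq0 Hrq] := @cont_ball _ _ _ q _ gc r0.
    have rr0 : 0 < Num.min rp rq by rewrite lt_min rp0 rq0.
    have [a [b [[/= ab _] [pa qb]]]] := Hpq _ _ r0 rr0.
    move: pa qb; rewrite !lt_min => /andP [pa _] /andP [_ qb].
    have h1 := Hrp _ pa; have h2 := Hrq _ qb.
    have := @mdist_trans3 _ _ (g p) (g a) (g b) (g q); rewrite (metric_sym (g b) (g q)).
    lra.
  have [a [b [[/= _ [n [lt_n Hn']]] [pa qb]]]] := Hpq _ _ ltr01 d00.
  have lt_in : (i < n)%N by apply: ltn_trans lt_n.
  have h1 := H0 n _ _ lt_in pa; have h2 := H0 n _ _ lt_in qb.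
  move: h1 h2; rewrite !(@omega_step _ _ i n) // -/g gpq => h1 h2.
  have := @mdist_trans3 _ _ (omega_from f i.+1 n (g a)) (omega_from f i.+1 n (g q))
    (omega_from f i.+1 n (g q)) (omega_from f i.+1 n (g b)).
  rewrite mdistxx (metric_sym (omega_from f i.+1 n (g a)) (omega_from f i.+1 n (g q))).
  lra.
Qed.

Theorem mainTheorem2 (R : realType) (X : metricType R) (f : nat -> X -> X)
  (k : nat) :
  compact [set: X] ->
  (forall n : nat, (0 < n)%N -> continuous (f n)) ->
  (forall n : nat, (0 < n)%N -> forall y : X, exists x : X, f n x = y) ->
  (equicontinuous_from f k <-> equicontinuous_from f 0).
Proof.
move=> cX fc fs; elim: k => [//|k IH].
rewrite -IH; apply: step => //; [exact: fc | exact: fs].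
Qed.
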